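(* LexiPS is not sd-weakly-strategyproof if agents may misreport their importance orders: there is a multi-type resource allocation problem with $n=2$ agents and $p=3$ types $F,B,T$, with $D_F=\{1_F,2_F\}$, $D_B=\{1_B,2_B\}$, $D_T=\{1_T,2_T\}$, where both agents have lexicographic preferences with $1_i\rhd^i_j 2_i$ for all types $i$ and both agents $j$, agent 1 has importance order $F\rhd_1 B\rhd_1 T$ and agent 2 has importance order $T\rhd_2 F\rhd_2 B$, such that if agent 2 reports instead the lexicographic preference with the same per-type orders and importance order $F\rhd B\rhd T$ replaced by $F\rhd T\rhd B$, then agent 2's resulting LexiPS allocation weakly stochastically dominates her truthful LexiPS allocation w.r.t. her true preference and differs from it.
   Context: Setting: $N=\{1,\dots,n\}$ agents; $M=D_1\cup\dots\cup D_p$ items with pairwise disjoint types, $|D_i|=n$, unit supply; bundles $\mathcal D=D_1\times\dots\times D_p$, $x_i$ the type-$i$ component. Lexicographic preference: agent $j$ has an importance order $\rhd_j$ over types and orders $\rhd^i_j$ on each $D_i$; $x\succ_j y$ iff there is a type $i$ with $x_i\rhd^i_j y_i$ and $x_{i'}=y_{i'}$ for all $i'\rhd_j i$. $U(\succ,x)=\{y:y\succ x\}\cup\{x\}$; $p$ weakly stochastically dominates $q$ w.r.t. $\succ$ if $\sum_{y\in U(\succ,x)}p_y\ge\sum_{y\in U(\succ,x)}q_y$ for all $x$. LexiPS: remaining supplies start at $1$ and carry across phases. In phase $k=1,\dots,p$ (unit duration each), each agent $j$ eats at rate $1$ her $\rhd^i_j$-most-preferred item with positive remaining supply among items of her $k$-th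 most important type $i$. With $s^i_{j,o}$ the amount of $o\in D_i$ eaten by $j$, the output is $p_{j,x}=\prod_i s^i_{j,x_i}$. *)

(* Defs.v *)
From mathcomp Require Import all_boot all_order all_algebra all_fingroup.
Set Implicit Arguments. Unset Strict Implicit. Unset Printing Implicit Defensive.
Import Order.TTheory GRing.Theory Num.Theory.
Local Open Scope ring_scope.

(* Agents are 'I_n, types are 'I_p, the items of each type D_i are indexed by
   'I_n (so |D_i| = n).  A bundle picks one item of each type. *)
Definition bundle (n p : nat) := {ffun 'I_p -> 'I_n}.

(* Lexicographic preference:
   imp k       = the k-th most important type (k = 0 is the most important);
   rank i o    = position of item o in the order |>^i on D_i (0 = best).
   Both maps are injective, hence bijective (strict linear orders). *)
Record lexpref (n p : nat) := LexPref {
  imp : 'I_p -> 'I_p;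
  imp_inj : injective imp;
  rank : 'I_p -> 'I_n -> 'I_n;
  rank_inj : forall i, injective (rank i)
}.

Section Lex.
Variables (n p : nat).
Implicit Types (P : lexpref n p) (x y : bundle n p).

Definition item_better P (i : 'I_p) (o o' : 'I_n) : bool :=
  (rank P i o < rank P i o')%N.

Definition lex_pref P x y : bool :=
  [exists k : 'I_p, item_better P (imp P k) (x (imp P k)) (y (imp P k)) &&
     [forall k' : 'I_p, (k' < k)%N ==> (x (imp P k') == y (imp P k'))]].

Definition upset P x : {set bundle n p} := [set y | lex_pref P y x] :|: [set x].

Definition sd_weak P (f g : {ffun bundle n p -> rat}) : Prop :=
  forall x, \sum_(y in upset P x) g y <= \sum_(y in upset P x) f y.

Definition supplyT := {ffun 'I_p -> {ffun 'I_n -> rat}}.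
Definition eatenT := {ffun 'I_n -> {ffun 'I_p -> {ffun 'I_n -> rat}}}.
(* state: remaining time in the current phase, remaining supplies, amounts eaten *)
Definition stateT := (rat * supplyT * eatenT)%type.

Definition target P (sup : supplyT) (t : 'I_p) : option 'I_n :=
  [pick o : 'I_n | (0 < sup t o) &&
        [forall o' : 'I_n, (0 < sup t o') ==> (rank P t o <= rank P t o')%N]].

(* one event of phase k: every agent eats its current target at rate 1 until
   either some eaten item is exhausted or the phase ends *)
Definition ps_step (prof : 'I_n -> lexpref n p) (k : 'I_p) (st : stateT) : stateT :=
  let: (tau, sup, eat) := st in
  let ty j := imp (prof j) k in
  let tgt j := target (prof j) sup (ty j) in
  let cnt t o := #|[set j : 'I_n | (ty j == t) && (tgt j == Some o)]| in
  let delta := \big[Num.min/tau]_(t : 'I_p)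
                 \big[Num.min/tau]_(o : 'I_n | cnt t o != 0%N)
                    (sup t o / (cnt t o)%:R) in
  (tau - delta,
   [ffun t => [ffun o => sup t o - (cnt t o)%:R * delta]],
   [ffun j => [ffun t => [ffun o => eat j t o +
       (if (t == ty j) && (tgt j == Some o) then delta else 0)]]]).

(* a phase has unit duration; at most n*p items can be exhausted, so n*p+1
   events suffice (afterwards the remaining time is 0 and steps are no-ops) *)
Definition ps_phase prof (k : 'I_p) (st : stateT) : stateT :=
  let: (_, sup, eat) := st in
  iter (n * p).+1 (ps_step prof k) (1, sup, eat).

Definition lexips_eaten (prof : 'I_n -> lexpref n p) : eatenT :=
  (foldl (fun st k => ps_phase prof k st)
         ((1 : rat), [ffun _ => [ffun _ => 1]], [ffun _ => [ffun _ => [ffun _ => 0]]]) (enum 'I_p)).2.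

Definition lexips (prof : 'I_n -> lexpref n p) (j : 'I_n) : {ffun bundle n p -> rat} :=
  [ffun x : bundle n p => \prod_(i : 'I_p) lexips_eaten prof j i (x i)].

End Lex.

(* ---- the concrete instance: n = 2, p = 3 ----
   types F = 0, B = 1, T = 2; items 1_i = 0, 2_i = 1; agent 1 = 0, agent 2 = 1 *)
Definition typF : 'I_3 := @Ordinal 3 0 isT.
Definition typB : 'I_3 := @Ordinal 3 1 isT.
Definition typT : 'I_3 := @Ordinal 3 2 isT.

Definition imp_fun (a b c : 'I_3) (k : 'I_3) : 'I_3 :=
  match val k with 0 => a | 1 => b | _ => c end.

Lemma imp_FBT_inj : injective (imp_fun typF typB typT).
Proof. by move=> [[|[|[|?]]] ?] [[|[|[|?]]] ?] //= _; apply/val_inj. Qed.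
Lemma imp_TFB_inj : injective (imp_fun typT typF typB).
Proof. by move=> [[|[|[|?]]] ?] [[|[|[|?]]] ?] //= _; apply/val_inj. Qed.
Lemma imp_FTB_inj : injective (imp_fun typF typT typB).
Proof. by move=> [[|[|[|?]]] ?] [[|[|[|?]]] ?] //= _; apply/val_inj. Qed.

Definition lex23 (a b c : 'I_3) (H : injective (imp_fun a b c)) : lexpref 2 3 :=
  @LexPref 2 3 (imp_fun a b c) H (fun _ o => o) (fun _ => @inj_id _).

Definition pref_FBT := lex23 imp_FBT_inj.
Definition pref_TFB := lex23 imp_TFB_inj.
Definition pref_FTB := lex23 imp_FTB_inj.

Definition agent1 : 'I_2 := @Ordinal 2 0 isT.
Definition agent2 : 'I_2 := @Ordinal 2 1 isT.

Definition profile2 (P1 P2 : lexpref 2 3) : 'I_2 -> lexpref 2 3 :=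
  fun j => if j == agent1 then P1 else P2.

(* Main.v *)
Require Import Defs.
From mathcomp Require Import all_boot all_order all_algebra all_fingroup.
From mathcomp Require Import zify.
Set Implicit Arguments. Unset Strict Implicit. Unset Printing Implicit Defensive.
Import Order.TTheory GRing.Theory Num.Theory.
Local Open Scope ring_scope.

Definition o0 : 'I_2 := ord0.
Definition o1 : 'I_2 := lift ord0 (ord0 : 'I_1).
Definition t0 : 'I_3 := ord0.
Definition t1 : 'I_3 := lift ord0 (ord0 : 'I_2).
Definition t2 : 'I_3 := lift ord0 (lift ord0 (ord0 : 'I_1)).

Lemma ord2P (o : 'I_2) : o = o0 \/ o = o1.
Proof. by case: o => [[|[|m]] H]; [left|right|]; try apply/val_inj. Qed.
Lemma ord3P (o : 'I_3) : [\/ o = t0, o = t1 | o = t2].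
Proof. by case: o => [[|[|[|m]]] H]; [apply: Or31|apply: Or32|apply: Or33|]; try apply/val_inj. Qed.

Lemma enum3 : enum 'I_3 = [:: t0; t1; t2].
Proof. by apply: (inj_map val_inj); rewrite val_enum_ord. Qed.

Lemma card2 (P : pred 'I_2) : #|[set j | P j]| = (P o0 + P o1)%N.
Proof.
rewrite -sum1_card big_mkcond big_ord_recl big_ord_recl big_ord0 !inE /=.
by case: (P o0); case: (P o1).
Qed.

Lemma forall2 (P : pred 'I_2) : [forall o, P o] = P o0 && P o1.
Proof.
apply/forallP/andP => [H|[H0 H1] o]; first by split; apply: H.
by case: (ord2P o) => ->.
Qed.

Definition gs (sv : seq rat) (t : 'I_3) (o : 'I_2) : rat := nth 0 sv (2 * t + o).
Definition ge (ev : seq rat) (j : 'I_2) (t : 'I_3) (o : 'I_2) : rat :=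
  nth 0 ev (6 * j + 2 * t + o).
Definition mkS (sv : seq rat) : supplyT 2 3 := [ffun t => [ffun o => gs sv t o]].
Definition mkE (ev : seq rat) : eatenT 2 3 :=
  [ffun j => [ffun t => [ffun o => ge ev j t o]]].

Definition tc_cond (P : lexpref 2 3) (sv : seq rat) (t : 'I_3) (o : 'I_2) : bool :=
  (0 < gs sv t o) &&
     (((0 < gs sv t o0) ==> (rank P t o <= rank P t o0)%N) &&
      ((0 < gs sv t o1) ==> (rank P t o <= rank P t o1)%N)).
Definition target_c (P : lexpref 2 3) (sv : seq rat) (t : 'I_3) : option 'I_2 :=
  if tc_cond P sv t o0 then Some o0 else if tc_cond P sv t o1 then Some o1 else None.

Lemma target_cE P sv t : target P (mkS sv) t = target_c P sv t.
Proof.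
rewrite /target /target_c.
have Hc : (fun o => (0 < mkS sv t o) &&
        [forall o' : 'I_2, (0 < mkS sv t o') ==> (rank P t o <= rank P t o')%N]) =1 tc_cond P sv t.
  by move=> o; rewrite forall2 /tc_cond !ffunE.
rewrite (eq_pick Hc).
case: pickP => [o Ho|Hn]; last by rewrite (Hn o0) (Hn o1).
case: (ord2P o) Ho => -> Ho; first by rewrite Ho.
case H0: (tc_cond P sv t o0); last by rewrite Ho.
exfalso; move: H0 Ho; rewrite /tc_cond => /andP[p0 /andP[_ l01]] /andP[p1 /andP[l10 _]].
move: l01 l10; rewrite p0 p1 /= => l01 l10.
have : rank P t o0 = rank P t o1 by apply/val_inj/eqP; rewrite eqn_leq l01 l10.
by move/rank_inj.
Qed.

Lemma ie2 : index_enum 'I_2 = [:: o0; o1].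
Proof.
rewrite -[index_enum _]filter_predT deprecated_filter_index_enum.
by apply: (inj_map val_inj); rewrite val_enum_ord.
Qed.

Lemma big2_cond (op : rat -> rat -> rat) idx (P : pred 'I_2) F :
  \big[op/idx]_(o < 2 | P o) F o =
  (if P o0 then op (F o0) (if P o1 then op (F o1) idx else idx)
   else (if P o1 then op (F o1) idx else idx)).
Proof. by rewrite ie2 !big_cons big_nil. Qed.

Section Step.
Variables (prof : 'I_2 -> lexpref 2 3) (k : 'I_3).

Definition tyc (j : 'I_2) := imp (prof j) k.
Definition cnt_c (sv : seq rat) (t : 'I_3) (o : 'I_2) : nat :=
  ((tyc o0 == t) && (target_c (prof o0) sv (tyc o0) == Some o)) +
  ((tyc o1 == t) && (target_c (prof o1) sv (tyc o1) == Some o)).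
Definition mn tau sv t : rat :=
  if cnt_c sv t o0 != 0%N then
    Num.min (gs sv t o0 / (cnt_c sv t o0)%:R)
      (if cnt_c sv t o1 != 0%N then Num.min (gs sv t o1 / (cnt_c sv t o1)%:R) tau else tau)
  else (if cnt_c sv t o1 != 0%N then Num.min (gs sv t o1 / (cnt_c sv t o1)%:R) tau else tau).
Definition dc tau sv : rat := Num.min (mn tau sv t0) (Num.min (mn tau sv t1) (Num.min (mn tau sv t2) tau)).
Definition ns sv d t o := gs sv t o - (cnt_c sv t o)%:R * d.
Definition ne sv ev d j t o := ge ev j t o +
   (if (t == tyc j) && (target_c (prof j) sv (tyc j) == Some o) then d else 0).

Definition state_c := (rat * seq rat * seq rat)%type.
Definition stepc (st : state_c) : state_c :=
  let: (tau, sv, ev) := st in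
  let d := dc tau sv in
  (tau - d,
   [:: ns sv d t0 o0; ns sv d t0 o1; ns sv d t1 o0; ns sv d t1 o1; ns sv d t2 o0; ns sv d t2 o1],
   [:: ne sv ev d o0 t0 o0; ne sv ev d o0 t0 o1; ne sv ev d o0 t1 o0; ne sv ev d o0 t1 o1;
       ne sv ev d o0 t2 o0; ne sv ev d o0 t2 o1;
       ne sv ev d o1 t0 o0; ne sv ev d o1 t0 o1; ne sv ev d o1 t1 o0; ne sv ev d o1 t1 o1;
       ne sv ev d o1 t2 o0; ne sv ev d o1 t2 o1]).

Definition lift_st (st : state_c) : stateT 2 3 := (st.1.1, mkS st.1.2, mkE st.2).

Lemma cntE sv t o :
  #|[set j : 'I_2 | (imp (prof j) k == t) &&
       (target (prof j) (mkS sv) (imp (prof j) k) == Some o)]| = cnt_c sv t o.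
Proof. by rewrite card2 !target_cE. Qed.

Lemma step_eq st : ps_step prof k (lift_st st) = lift_st (stepc st).
Proof.
case: st => [[tau sv] ev] /=.
rewrite /ps_step /lift_st /=.
set d := \big[Num.min/tau]_(t < 3) _.
have -> : d = dc tau sv.
  rewrite /d !big_ord_recl !big_ord0 !big2_cond !cntE !ffunE.
  by [].
congr (_, _, _).
  apply/ffunP => t; apply/ffunP => o; rewrite !ffunE cntE.
  by case: (ord3P t) => ->; case: (ord2P o) => ->.
apply/ffunP => j; apply/ffunP => t; apply/ffunP => o; rewrite !ffunE target_cE.
by case: (ord2P j) => ->; case: (ord3P t) => ->; case: (ord2P o) => ->.
Qed.
End Step.

Definition phasec prof k (st : state_c) : state_c :=
  let: (_, sv, ev) := st in iter (2 * 3).+1 (stepc prof k) (1, sv, ev).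

Lemma iter_eq prof k m st :
  iter m (ps_step prof k) (lift_st st) = lift_st (iter m (stepc prof k) st).
Proof. elim: m => [|m IH] //; by rewrite iterS IH step_eq. Qed.

Lemma phase_eq prof k st : ps_phase prof k (lift_st st) = lift_st (phasec prof k st).
Proof.
case: st => [[x sv] ev].
rewrite /ps_phase /phasec.
exact: (iter_eq prof k (2 * 3).+1 (1, sv, ev)).
Qed.

Lemma fold_eq prof l st :
  foldl (fun st k => ps_phase prof k st) (lift_st st) l =
  lift_st (foldl (fun st k => phasec prof k st) st l).
Proof. elim: l st => [|a l IH] st; first by []. cbn [foldl]. rewrite phase_eq IH; reflexivity. Qed.

Definition EVc prof : seq rat :=
  (foldl (fun st k => phasec prof k st) ((1 : rat), nseq 6 (1 : rat), nseq 12 (0 : rat)) [:: t0; t1; t2]).2.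

Lemma eaten_eq prof : lexips_eaten prof = mkE (EVc prof).
Proof.
rewrite /lexips_eaten. rewrite enum3.
have -> : ((1 : rat), [ffun _ => [ffun _ => 1]], [ffun _ => [ffun _ => [ffun _ => 0]]])
   = lift_st (1, nseq 6 1, nseq 12 0).
  congr (_, _, _).
    apply/ffunP => t. apply/ffunP => o. rewrite !ffunE. rewrite /gs nth_nseq. rewrite ifT //.
    (have := ltn_ord t; have := ltn_ord o; lia).
  apply/ffunP => j; apply/ffunP => t; apply/ffunP => o; rewrite !ffunE /ge nth_nseq ifT //.
  (have := ltn_ord t; have := ltn_ord o; have := ltn_ord j; lia).
rewrite fold_eq /EVc. reflexivity.
Qed.

Definition tru := profile2 pref_FBT pref_TFB.
Definition mis := profile2 pref_FBT pref_FTB.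
Lemma EVt : EVc tru == [:: 1; 0; 1; 0; 0; 1; 0; 1; 0; 1; 1; 0].
Proof. by vm_compute. Qed.
Lemma EVm : EVc mis == [:: 1/2; 1/2; 1; 0; 0; 1; 1/2; 1/2; 0; 1; 1; 0].
Proof. by vm_compute. Qed.

Definition mkB (a b c : 'I_2) : bundle 2 3 :=
  [ffun i : 'I_3 => if i == t0 then a else if i == t1 then b else c].
Definition b0 := mkB o1 o1 o0.
Definition b1 := mkB o0 o1 o0.

Lemma bundle_dec (x : bundle 2 3) : x = mkB (x t0) (x t1) (x t2).
Proof. by apply/ffunP => i; rewrite ffunE; case: (ord3P i) => ->. Qed.

Lemma bundle_eqE (y b : bundle 2 3) :
  (y == b) = [&& y t0 == b t0, y t1 == b t1 & y t2 == b t2].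
Proof.
apply/eqP/and3P => [->|[/eqP h0 /eqP h1 /eqP h2]]; first by rewrite !eqxx.
by apply/ffunP => i; case: (ord3P i) => ->.
Qed.

Lemma exists3 (P : pred 'I_3) : [exists k, P k] = [|| P t0, P t1 | P t2].
Proof.
apply/existsP/or3P => [[k]|[]H]; last 3 first.
- by exists t0.
- by exists t1.
- by exists t2.
by case: (ord3P k) => -> H; [apply: Or31|apply: Or32|apply: Or33].
Qed.

Lemma forall3 (P : pred 'I_3) : [forall k, P k] = [&& P t0, P t1 & P t2].
Proof.
apply/forallP/and3P => [H|[H0 H1 H2] k]; first by split; apply: H.
by case: (ord3P k) => ->.
Qed.

Lemma valT (y : bundle 2 3) : lexips tru agent2 y = (y == b0)%:R.
Proof.
rewrite ffunE !big_ord_recl big_ord0 eaten_eq !ffunE (eqP EVt) bundle_eqE /b0 !ffunE.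
case: (ord2P (y t0)) => ->; case: (ord2P (y (lift ord0 ord0))) => ->;
  case: (ord2P (y (lift ord0 (lift ord0 ord0)))) => ->; by apply/eqP; vm_compute.
Qed.

Lemma valM (y : bundle 2 3) :
  lexips mis agent2 y = 2^-1 * (y == b1)%:R + 2^-1 * (y == b0)%:R.
Proof.
rewrite ffunE !big_ord_recl big_ord0 eaten_eq !ffunE (eqP EVm) !bundle_eqE /b0 /b1 !ffunE.
case: (ord2P (y t0)) => ->; case: (ord2P (y (lift ord0 ord0))) => ->;
  case: (ord2P (y (lift ord0 (lift ord0 ord0)))) => ->; by apply/eqP; vm_compute.
Qed.

Lemma sum_ind (U : {set bundle 2 3}) b :
  \sum_(y in U) ((y == b)%:R : rat) = (b \in U)%:R.
Proof.
case: (boolP (b \in U)) => H.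
  rewrite (bigD1 b) //= eqxx big1 ?addr0 // => y /andP[_ /negbTE ->] //.
rewrite big1 // => y Hy; have : y != b by apply: contraNneq H => <-.
by move/negbTE ->.
Qed.

Lemma key (x : bundle 2 3) : b0 \in upset pref_TFB x -> b1 \in upset pref_TFB x.
Proof.
rewrite /upset !inE /lex_pref !exists3 !forall3 (bundle_dec x) !bundle_eqE /b0 /b1 !ffunE.
case: (ord2P (x t0)) => ->; case: (ord2P (x t1)) => ->; case: (ord2P (x t2)) => ->;
  vm_compute; auto.
Qed.

Theorem mainTheorem5 :
  let truthful := profile2 pref_FBT pref_TFB in
  let misreport := profile2 pref_FBT pref_FTB in
  sd_weak pref_TFB (lexips misreport agent2) (lexips truthful agent2) /\
  lexips misreport agent2 <> lexips truthful agent2.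
Proof.
move=> truthful misreport.
rewrite /truthful /misreport -/tru -/mis.
split.
  move=> x.
  rewrite (eq_bigr _ (fun y _ => valT y)) (eq_bigr _ (fun y _ => valM y)).
  rewrite big_split /= -!mulr_sumr !sum_ind.
  have := @key x.
  case: (b0 \in _); case: (b1 \in _) => K; try (by have := K isT); by vm_compute.
move=> E.
have := valM b1; rewrite E valT.
rewrite !bundle_eqE /b0 /b1 !ffunE; move/eqP; vm_compute => H; discriminate H.
Qed.
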